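(* Let $\mathcal G$ be a simple hypergraph with vertex set $[n]$. If all coefficients of the formal power series $I(\mathcal G,-x)^{-1}\in\mathbb Q[[x_1,\dots,x_n]]$ are nonnegative, then every edge of $\mathcal G$ has even cardinality.
   Context: A hypergraph $\mathcal G$ on $[n]$ is simple if every edge has at least two elements and no edge properly contains another. $I(\mathcal G,x)=\sum_I\prod_{v\in I}x_v$, summed over all independent subsets $I\subseteq[n]$ (those containing no edge), including $\emptyset$. $I(\mathcal G,-x)$ is obtained by substituting $x_i\mapsto-x_i$ for all $i$; it has constant term $1$, so its inverse exists in $\mathbb Q[[x_1,\dots,x_n]]$. *)

(* Defs.v *)
From HB Require Import structures.
From mathcomp Require Import all_boot all_order all_algebra.
Set Implicit Arguments. Unset Strict Implicit. Unset Printing Implicit Defensive.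
Import Order.TTheory GRing.Theory Num.Theory.
Local Open Scope ring_scope.

Definition hypergraph (n : nat) := {set {set 'I_n}}.

Definition simple_hg n (G : hypergraph n) : Prop :=
  (forall e, e \in G -> (2 <= #|e|)%N) /\
  (forall e f, e \in G -> f \in G -> ~~ (f \proper e)).

Definition independent n (G : hypergraph n) (I : {set 'I_n}) : bool :=
  [forall e in G, ~~ (e \subset I)].

(* Formal power series in x_1..x_n over Q: monomial exponent vectors
   'I_n -> nat mapped to rational coefficients. *)
Definition monom (n : nat) := 'I_n -> nat.
Definition fps (n : nat) := monom n -> rat.

Definition mmax n (m : monom n) : nat := \max_(i < n) m i.

(* Cauchy product coefficient: sum over all a <= m (componentwise). *)
Definition fps_mul n (P Q : fps n) : fps n := fun m =>
  \sum_(a : {ffun 'I_n -> 'I_(mmax m).+1} | [forall i, (a i <= m i)%N])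
     P (fun i => nat_of_ord (a i)) * Q (fun i => (m i - a i)%N).

Definition fps_one n : fps n := fun m => if [forall i, m i == 0%N] then 1 else 0.

(* I(G, -x) = sum over independent I of prod_{v in I} (-x_v) *)
Definition indep_poly_neg n (G : hypergraph n) : fps n := fun m =>
  if [forall i, (m i <= 1)%N] && independent G [set i | m i == 1%N]
  then (-1) ^+ #|[set i | m i == 1%N]| else 0.

(* Main.v *)
Require Import Defs.
From HB Require Import structures.
From mathcomp Require Import all_boot all_order all_algebra.
From Stdlib Require Import FunctionalExtensionality.
From mathcomp Require Import zify lra.
Import Order.TTheory GRing.Theory Num.Theory.
Set Implicit Arguments. Unset Strict Implicit. Unset Printing Implicit Defensive.
Local Open Scope ring_scope.

Definition supp n (m : monom n) : {set 'I_n} := [set i | m i != 0%N].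
Definition msub n (m : monom n) (S : {set 'I_n}) : monom n :=
  fun i => (m i - (i \in S))%N.

Lemma alt_sum (T : finType) (A : {set T}) :
  \sum_(S : {set T} | S \subset A) (-1) ^+ #|S| = (A == set0)%:R :> rat.
Proof.
have [->|/set0Pn [x xA]] := eqVneq A set0.
  rewrite (big_pred1 set0) ?cards0 ?expr0 //.
  by move=> S /=; rewrite subset0.
set t := fun S : {set T} => if x \in S then S :\ x else x |: S.
have tK : involutive t.
  move=> S; rewrite /t; case xS: (x \in S).
    by rewrite setD11 setD1K.
  by rewrite setU11 setU1K ?xS.
set s := (X in X = _).
have E : s = - s.
  rewrite {1}/s (reindex_inj (inv_inj tK)) /= -sumrN.
  apply: eq_big => S.
    rewrite /t; case: ifP => xS.
      apply/idP/idP => H; first by rewrite -(setD1K xS) subUset sub1set xA.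
      by apply: subset_trans H; apply: subD1set.
    apply/idP/idP => H; last by rewrite subUset sub1set xA.
    by apply: subset_trans H; apply: subsetUr.
  move=> _; rewrite /t; case: ifP => xS.
    by rewrite -(setD1K xS) cardsU1 setD11 /= setD1K // exprS mulN1r opprK.
  by rewrite cardsU1 xS /= exprS mulN1r.
have : s *+ 2 = 0 by rewrite mulr2n {2}E subrr.
move/eqP; rewrite mulrn_eq0 /= => /eqP ->.
by [].
Qed.

Lemma mul_sets n (G : hypergraph n) (F : fps n) (m : monom n) :
  fps_mul (indep_poly_neg G) F m =
  \sum_(S : {set 'I_n} | S \subset supp m)
     (if independent G S then (-1) ^+ #|S| else 0) * F (msub m S).
Proof.
rewrite /fps_mul.
set M := mmax m.
have hM : forall i, (m i <= M)%N by move=> i; rewrite /M /mmax; exact: (@leq_bigmax _ (fun i => m i) i).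
pose h := fun S : {set 'I_n} => [ffun i => (inord (i \in S) : 'I_M.+1)].
have hval : forall (S : {set 'I_n}) (i : 'I_n), S \subset supp m -> nat_of_ord (h S i) = (i \in S).
  move=> S i sS; rewrite ffunE inordK //.
  case iS: (i \in S) => //=.
  have : i \in supp m by apply: (subsetP sS).
  rewrite inE -lt0n => mi; exact: leq_trans mi (hM i).
pose A := [set S : {set 'I_n} | S \subset supp m].
have hinj : {in A &, injective h}.
  move=> S T; rewrite !inE => sS sT E; apply/setP => i.
  have := congr1 (fun g : {ffun 'I_n -> 'I_M.+1} => nat_of_ord (g i)) E => /=.
  rewrite hval // hval //.
  by case: (i \in S); case: (i \in T).
set f := fun a : {ffun 'I_n -> 'I_M.+1} =>
   indep_poly_neg G (fun i => nat_of_ord (a i)) * F (fun i => (m i - a i)%N).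
transitivity (\sum_(a in h @: A) f a).
  rewrite big_mkcond [RHS]big_mkcond; apply: eq_bigr => a _.
  case Ha: (a \in h @: A).
    move/imsetP: Ha => [S]; rewrite inE => sS ->.
    have -> // : [forall i, (h S i <= m i)%N].
    apply/forallP => i; rewrite hval //.
    case iS: (i \in S) => //=.
    have : i \in supp m by apply: (subsetP sS).
    by rewrite inE lt0n.
  case: ifP => // /forallP Ham.
  rewrite /f /indep_poly_neg.
  case: ifP; last by rewrite mul0r.
  move/andP=> [/forallP H1 _].
  exfalso; move/negbT: Ha => /negP; apply.
  apply/imsetP; exists [set i | nat_of_ord (a i) == 1%N].
    rewrite inE; apply/subsetP => i; rewrite !inE => /eqP ai.
    have := Ham i; rewrite ai lt0n => //.
  apply/ffunP => i; rewrite ffunE; apply: val_inj => /=.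
  rewrite inordK; last first.
    rewrite inE; case: eqP => [ai|] //=.
    have := Ham i; rewrite ai => mi; exact: leq_trans mi (hM i).
  rewrite inE; have := H1 i; case: (nat_of_ord (a i)) => [|[|k]] //.
rewrite big_imset //.
apply: eq_big => S; first by rewrite inE.
rewrite inE => sS.
rewrite /f.
have E1 : (fun i => nat_of_ord (h S i)) = (fun i => nat_of_bool (i \in S)).
  by apply: functional_extensionality => i; rewrite hval.
have E2 : (fun i => (m i - h S i)%N) = msub m S.
  by apply: functional_extensionality => i; rewrite hval.
rewrite E1 E2; congr (_ * _).
rewrite /indep_poly_neg.
have -> : [set i | nat_of_bool (i \in S) == 1%N] = S.
  by apply/setP => i; rewrite inE; case: (i \in S).
have -> // : [forall i, (nat_of_bool (i \in S) <= 1)%N].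
by apply/forallP => i; case: (i \in S).
Qed.

Lemma one_supp n (m : monom n) : fps_one m = (supp m == set0)%:R.
Proof.
rewrite /fps_one.
have -> : [forall i, m i == 0%N] = (supp m == set0).
  apply/forallP/eqP => [H|H i].
    by apply/setP => i; rewrite !inE (H i).
  have := congr1 (fun A : {set 'I_n} => i \in A) H; rewrite !inE /= => /negbFE //.
by case: (supp m == set0).
Qed.

Lemma indep_sub n (G : hypergraph n) (e S : {set 'I_n}) :
  simple_hg G -> e \in G -> S \subset e -> independent G S = ~~ (e \subset S).
Proof.
move=> [_ Hs] eG Se; rewrite /independent.
apply/forallP/idP.
  by move=> /(_ e); rewrite eG.
move=> eS f; apply/implyP => fG; apply/negP => fS.
have := Hs e f eG fG; rewrite properE (subset_trans fS Se) /= negbK => ef.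
by move/negP: eS; apply; apply: subset_trans ef fS.
Qed.

Lemma msub0 n (m : monom n) : msub m set0 = m.
Proof. by apply: functional_extensionality => i; rewrite /msub inE subn0. Qed.

Lemma msub_supp n (m : monom n) (S : {set 'I_n}) : supp (msub m S) \subset supp m.
Proof.
apply/subsetP => i; rewrite !inE /msub; apply: contra => /eqP ->; by [].
Qed.

Lemma msub_deg n (m : monom n) (S : {set 'I_n}) : S \subset supp m -> S != set0 ->
  (\sum_(i < n) msub m S i < \sum_(i < n) m i)%N.
Proof.
move=> Sm /set0Pn [x xS].
have := subsetP Sm x xS; rewrite inE => mx.
rewrite (bigD1 x) //= [X in (_ < X)%N](bigD1 x) //=.
have H : (\sum_(i < n | i != x) msub m S i <= \sum_(i < n | i != x) m i)%N.
  by apply: leq_sum => i _; rewrite /msub leq_subr.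
rewrite /msub xS /=.
have : (0 < m x)%N by rewrite lt0n.
move: H; set a := (\sum_(i < n | _) _)%N; set b := (\sum_(i < n | _) _)%N.
move=> H mx0.
lia.
Qed.

Definition cf n (e S : {set 'I_n}) : rat := if ~~ (e \subset S) then (-1) ^+ #|S| else 0.

Lemma rel n (G : hypergraph n) (F : fps n) (e : {set 'I_n}) (m : monom n) :
  simple_hg G -> (forall m, fps_mul (indep_poly_neg G) F m = fps_one m) ->
  e \in G -> supp m \subset e ->
  \sum_(S : {set 'I_n} | S \subset supp m) cf e S * F (msub m S) = (supp m == set0)%:R.
Proof.
move=> sG HF eG me; rewrite -one_supp -HF mul_sets.
apply: eq_bigr => S Sm; rewrite /cf (@indep_sub _ _ e) //; exact: subset_trans Sm me.
Qed.

Lemma ones n (G : hypergraph n) (F : fps n) (e : {set 'I_n}) :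
  simple_hg G -> (forall m, fps_mul (indep_poly_neg G) F m = fps_one m) ->
  e \in G -> forall d (m : monom n), (\sum_(i < n) m i <= d)%N ->
  supp m \proper e -> F m = 1.
Proof.
move=> sG HF eG; elim=> [|d IH] m md me.
all: have R := rel sG HF eG (proper_sub me).
all: have A := alt_sum (supp m).
all: rewrite (bigD1 set0) ?sub0set // in R.
all: rewrite (bigD1 set0) ?sub0set // in A.
all: rewrite msub0 /cf cards0 expr0 in R.
all: have H0 : ~~ (e \subset set0) by
   apply/negP; rewrite subset0 => /eqP em;
   move: me; rewrite em properE sub0set andbF.
all: rewrite H0 mul1r in R.
all: rewrite cards0 expr0 in A.
all: set s := (\sum_(i : {set 'I_n} | _) (-1) ^+ #|i|) in A.
all: suff E : \sum_(i : {set 'I_n} | (i \subset supp m) && (i != set0))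
   (if ~~ (e \subset i) then (-1) ^+ #|i| else 0) * F (msub m i) = s.
all: try by move: R; rewrite E -A => /(congr1 (fun x => x - s)); rewrite !addrK.
all: apply: eq_bigr => S /andP [Sm S0].
all: have -> : ~~ (e \subset S) by
   apply/negP => eS; move: me; rewrite properE (subset_trans eS Sm) andbF.
1: by have := msub_deg Sm S0; lia.
rewrite (IH (msub m S)) ?mulr1 //.
- have := msub_deg Sm S0; lia.
- exact: sub_proper_trans (msub_supp _ _) me.
Qed.

Lemma csum n (e : {set 'I_n}) : odd #|e| ->
  \sum_(S : {set 'I_n} | S \subset e) cf e S = 1.
Proof.
move=> ko.
have e0 : e != set0 by apply/negP => /eqP e0; move: ko; rewrite e0 cards0.
have A := alt_sum e.
rewrite (bigD1 e) //= (negbTE e0) -signr_odd ko expr1 in A.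
rewrite (bigD1 e) //= {1}/cf subxx /= add0r.
have -> : \sum_(S : {set 'I_n} | (S \subset e) && (S != e)) cf e S =
          \sum_(S : {set 'I_n} | (S \subset e) && (S != e)) (-1) ^+ #|S|.
  apply: eq_bigr => S /andP [Se Sne]; rewrite /cf.
  have -> // : ~~ (e \subset S).
  by apply/negP => eS; move: Sne; rewrite eqEsubset Se eS.
move: A; rewrite /= mulr0n; lra.
Qed.

Lemma proper_msub n (m : monom n) (e S : {set 'I_n}) x :
  supp m \subset e -> S \subset e -> x \in S -> (m x <= 1)%N ->
  supp (msub m S) \proper e.
Proof.
move=> me Se xS mx.
rewrite properE (subset_trans (msub_supp m S) me) /=.
apply/negP => /subsetP /(_ x (subsetP Se x xS)); rewrite inE /msub xS /=.
by move=> H; move: H mx; case: (m x) => [|[|k]].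
Qed.

Lemma splitF n (e : {set 'I_n}) (g : {set 'I_n} -> rat) :
  \sum_(S : {set 'I_n} | S \subset e) cf e S * g S =
  \sum_(S : {set 'I_n} | S \subset e) cf e S +
  \sum_(S : {set 'I_n} | S \subset e) cf e S * (g S - 1).
Proof.
rewrite -big_split; apply: eq_bigr => S _ /=.
by rewrite mulrBr mulr1 addrC subrK.
Qed.

Theorem proposition8p1 (n : nat) (G : hypergraph n) (F : fps n) :
  simple_hg G ->
  (forall m, fps_mul (indep_poly_neg G) F m = fps_one m) ->
  (forall m, 0 <= F m) ->
  forall e, e \in G -> ~~ odd #|e|.
Proof.
move=> sG HF Fpos e eG; apply/negP => ko.
have e2 : (2 <= #|e|)%N by case: sG => H _; exact: H.
have e0 : e != set0 by apply/negP => /eqP e0; move: e2; rewrite e0 cards0.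
have [v ve] := set0Pn _ e0.
pose m1 : monom n := fun i => nat_of_bool (i \in e).
pose m2 : monom n := fun i => ((i \in e) + (i == v))%N.
have s1 : supp m1 = e by apply/setP => i; rewrite inE /m1; case: (i \in e).
have s2 : supp m2 = e.
  apply/setP => i; rewrite inE /m2; case ie: (i \in e) => //=.
  case: (i =P v) => [iv|_]; [by move: ie; rewrite iv ve | by []].
have ones' : forall (m : monom n), supp m \proper e -> F m = 1.
  by move=> m; apply: (ones sG HF eG (leqnn _)).
have cf0 : cf e set0 = 1 by rewrite /cf subset0 e0 cards0 expr0.
have R1 := @rel _ _ _ _ m1 sG HF eG ltac:(by rewrite s1).
have R2 := @rel _ _ _ _ m2 sG HF eG ltac:(by rewrite s2).
rewrite s1 (negbTE e0) splitF csum // in R1.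
rewrite s2 (negbTE e0) splitF csum // in R2.
rewrite (bigD1 set0) ?sub0set //= cf0 mul1r msub0 in R1.
rewrite big1 ?addr0 in R1; last first.
  move=> S /andP [Se /set0Pn [x xS]].
  rewrite ones' ?subrr ?mulr0 //; apply: (@proper_msub _ _ _ _ x) => //.
    by rewrite s1.
  by rewrite /m1; case: (x \in e).
have Fm1 : F m1 = 0 by move: R1; rewrite mulr0n; lra.
rewrite (bigD1 set0) ?sub0set //= cf0 mul1r msub0 in R2.
have v0 : [set v] != set0 by apply/set0Pn; exists v; rewrite set11.
rewrite (bigD1 [set v]) ?sub1set ?ve ?v0 //= in R2.
have cfv : cf e [set v] = -1.
  rewrite /cf cards1 expr1.
  have -> // : ~~ (e \subset [set v]).
  apply/negP => /subset_leq_card; rewrite cards1 => H.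
  by move: e2; rewrite ltnNge H.
have mv : msub m2 [set v] = m1.
  apply: functional_extensionality => i; rewrite /msub /m2 /m1 in_set1.
  by rewrite addnK.
rewrite cfv mv Fm1 in R2.
rewrite big1 ?addr0 in R2; last first.
  move=> S /andP [/andP [Se S0] Sv].
  have : ~~ (S \subset [set v]) by rewrite subset1 negb_or Sv S0.
  case/subsetPn => x xS xv.
  rewrite ones' ?subrr ?mulr0 //; apply: (@proper_msub _ _ _ _ x) => //.
    by rewrite s2.
  rewrite /m2 (subsetP Se x xS); move: xv; rewrite in_set1.
  by case: (x == v).
have := Fpos m2.
move: R2; rewrite mulr0n; lra.
Qed.
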